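(* Let $\mathcal{A}$ be a Banach algebra such that $\mathrm{rad}(\mathcal{A})=\mathrm{rann}(\mathcal{A})$ and $\mathcal{A}/\mathrm{rad}(\mathcal{A})$ is commutative, suppose $\mathcal{A}$ has a right identity, and let $z\in\mathcal{A}$. Then the following are equivalent: (i) $L_z$ is centralizing; (ii) $L_z$ is skew centralizing; (iii) $z\in Z(\mathcal{A})$.
   Context: $\mathrm{rad}(\mathcal{A})$ is the Jacobson radical and $\mathrm{rann}(\mathcal{A})=\{c\in\mathcal{A}: ac=0\ \forall a\in\mathcal{A}\}$. $L_z(a)=za$. $Z(\mathcal{A})$ is the center. A map $T$ is centralizing if $[T(a),a]=T(a)a-aT(a)\in Z(\mathcal{A})$ for all $a$, and skew centralizing if $\langle T(a),a\rangle=T(a)a+aT(a)\in Z(\mathcal{A})$ for all $a$. *)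

(* Defs.v *)
From HB Require Import structures.
From mathcomp Require Import all_boot all_order all_algebra.
From mathcomp Require Import complex.
From mathcomp Require Import all_classical all_reals all_analysis.
Set Implicit Arguments. Unset Strict Implicit. Unset Printing Implicit Defensive.
Import Order.TTheory GRing.Theory Num.Theory.
Import numFieldNormedType.Exports.
Local Open Scope ring_scope.

Definition banach_algebra_mul (R : realType) (V : completeNormedModType R[i])
  (mul : V -> V -> V) : Prop :=
  (forall a b c, mul a (mul b c) = mul (mul a b) c) /\
      (forall a b c, mul (a + b) c = mul a c + mul b c) /\
      (forall a b c, mul a (b + c) = mul a b + mul a c) /\
      (forall (k : R[i]) a b, mul (k *: a) b = k *: mul a b) /\
      (forall (k : R[i]) a b, mul a (k *: b) = k *: mul a b) /\
      (forall a b, `|mul a b| <= `|a| * `|b|).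

Section AlgNotions.
Variables (R : realType) (V : completeNormedModType R[i]) (mul : V -> V -> V).

(* y is left quasi-invertible: exists w with w + y - w y = 0
   (in a unitization: (1 - w)(1 - y) = 1). *)
Definition left_quasi_invertible (y : V) : Prop :=
  exists w : V, w + y - mul w y = 0.

(* Jacobson radical (Jacobson's characterization for possibly non-unital
   algebras): x in rad(A) iff a x is left quasi-invertible for all a. *)
Definition jacobson_rad (x : V) : Prop :=
  forall a : V, left_quasi_invertible (mul a x).

Definition rann (c : V) : Prop := forall a : V, mul a c = 0.

Definition alg_center (c : V) : Prop := forall a : V, mul c a = mul a c.

Definition quotient_rad_commutative : Prop :=
  forall a b : V, jacobson_rad (mul a b - mul b a).

Definition has_right_identity : Prop := exists e : V, forall a, mul a e = a.

Definition left_mul_map (z : V) : V -> V := fun a => mul z a.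

Definition centralizing (T : V -> V) : Prop :=
  forall a, alg_center (mul (T a) a - mul a (T a)).

Definition skew_centralizing (T : V -> V) : Prop :=
  forall a, alg_center (mul (T a) a + mul a (T a)).

End AlgNotions.

(* Main.v *)
Require Import Defs.
From HB Require Import structures.
From mathcomp Require Import all_boot all_order all_algebra.
From mathcomp Require Import complex.
From mathcomp Require Import all_classical all_reals all_analysis.
Import Order.TTheory GRing.Theory Num.Theory.
Import numFieldNormedType.Exports.
Local Open Scope ring_scope.

Theorem theorem5p5 (R : realType) (V : completeNormedModType R[i])
  (mul : V -> V -> V) (hA : banach_algebra_mul mul)
  (hrad : forall x : V, jacobson_rad mul x <-> rann mul x)
  (hcomm : quotient_rad_commutative mul)
  (hid : has_right_identity mul) (z : V) :
  (centralizing mul (left_mul_map mul z) <-> alg_center mul z) /\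
  (skew_centralizing mul (left_mul_map mul z) <-> alg_center mul z).
Proof.
case: hA => A [Dl [Dr [Zl [Zr _]]]].
have mulN : forall a x, mul a (- x) = - mul a x.
  by move=> a x; rewrite -scaleN1r Zr scaleN1r.
have mulNl : forall a x, mul (- x) a = - mul x a.
  by move=> a x; rewrite -scaleN1r Zl scaleN1r.
have mulB : forall a x y, mul a (x - y) = mul a x - mul a y.
  by move=> a x y; rewrite Dr mulN.
have mulBl : forall a x y, mul (x - y) a = mul x a - mul y a.
  by move=> a x y; rewrite Dl mulNl.
have rule : forall a b c, mul a (mul b c) = mul a (mul c b).
  move=> a b c; have := (hrad _).1 (hcomm b c) a.
  by rewrite mulB => /eqP; rewrite subr_eq0 => /eqP.
case: hid => e He.
have ee : mul e e = e := He e.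
have half : forall x y : V, x + x = y + y -> x = y.
  move=> x y h.
  have h2 : (2:R[i]) *: x = 2 *: y by rewrite !scaler_nat !mulr2n.
  have n2 : (2:R[i]) != 0 by rewrite pnatr_eq0.
  by rewrite -[x](scale1r) -[y]scale1r -(mulVf n2) -!scalerA h2.
have fromQ : (forall a, mul z (mul a a) = mul (mul a a) z) -> alg_center mul z.
  move=> Q.
  have ze : mul z e = z := He z.
  have ez : mul e z = z by have := Q e; rewrite ee ze.
  have K : forall a, mul z a + mul z a = mul a z + mul (mul e a) z.
    move=> a; have := Q (a + e).
    rewrite !Dl !Dr He ee.
    have -> : mul z (mul e a) = mul z a by rewrite rule He.
    rewrite !Dl ze ez Q !addrA => /addIr.
    by rewrite -!addrA => /addrI.
  have K2 : forall a, mul z a = mul (mul e a) z.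
    move=> a; have := K (mul e a).
    rewrite (A e e a) ee.
    have -> : mul z (mul e a) = mul z a by rewrite rule He.
    by move/half.
  move=> b; have := K b; rewrite -K2.
  by move/addIr.
have mul0l : forall b, mul 0 b = 0.
  by move=> b; apply: (addrI (mul 0 b)); rewrite addr0 -Dl addr0.
have mul0r : forall b, mul b 0 = 0.
  by move=> b; apply: (addrI (mul b 0)); rewrite addr0 -Dr addr0.
have sq : forall a, mul a (mul z a) = mul (mul a a) z.
  by move=> a; rewrite rule A.
split; split.
- move=> C; apply: fromQ => a.
  have := C a e; rewrite /left_mul_map He mulB.
  have -> : mul e (mul a (mul z a)) = mul e (mul (mul z a) a) by rewrite rule.
  rewrite subrr => /eqP; rewrite subr_eq0 => /eqP.
  by rewrite sq -A.
- move=> Zc a b; rewrite /left_mul_map.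
  have -> : mul (mul z a) a - mul a (mul z a) = 0.
    by rewrite sq -Zc A subrr.
  by rewrite mul0l mul0r.
- move=> C.
  have Hs : forall a, mul (mul z a) a + mul a (mul z a)
                = mul e (mul z (mul a a)) + mul e (mul z (mul a a)).
    move=> a; have := C a e; rewrite /left_mul_map He Dr => ->.
    by rewrite (rule e a (mul z a)) -(A z a a).
  have ez : mul e z = z.
    have := Hs e; rewrite !ee !He => /addIr; done.
  apply: fromQ => a.
  have := Hs a; rewrite !(A e z) ez -(A z a a) => /addrI.
  by rewrite sq => <-.
- move=> Zc a b; rewrite /left_mul_map.
  have -> : mul (mul z a) a + mul a (mul z a) = mul z (mul a a) + mul z (mul a a).
    by rewrite sq -(Zc (mul a a)) A.
  rewrite Dl Dr; congr (_ + _);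
  by rewrite -(A z (mul a a) b) (A b z) -(Zc b) -(A z b) (rule z b).
Qed.
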